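(* Define on $(0,\infty)^4$ the function $$S(x_1,x_2,x_3,x_4)=(x_1^2x_2^2x_3^2x_4)^{1/7}\Big[\tfrac{12}{x_1}+\tfrac{12}{x_2}+\tfrac{12}{x_3}+\tfrac{6}{x_4}-2\Big(\tfrac{x_1}{x_2x_3}+\tfrac{x_2}{x_1x_3}+\tfrac{x_3}{x_1x_2}\Big)-3\Big(\tfrac{x_1}{x_2x_4}+\tfrac{x_2}{x_1x_4}+\tfrac{x_4}{x_1x_2}\Big)\Big].$$ Let $x^*=(x_1,x_2,x_3,x_4)\approx(5.67352,1.09220,5.50695,5.72906)$ be the critical point of $S$ corresponding to Nikonorov's non-block-diagonal $\mathrm{SU}(3)$-invariant Einstein metric on $N^{130}$. Then $\frac{\partial^2 S}{\partial x_2^2}(x^* )>0$.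
   Context: $S$ is, up to a positive constant factor, the normalized total scalar curvature $\mathrm{Vol}^{2/7}\cdot s$ of the $\mathrm{SU}(3)$-invariant metrics $x_1Q'|_{\mathfrak p_1}\oplus x_2Q'|_{\mathfrak p_2}\oplus x_3Q'|_{\mathfrak p_3}\oplus x_4Q'|_{\mathfrak p_4}$ on the Aloff–Wallach space $N^{130}=N_{1,0}$, where $Q'(X,Y)=-\frac12\mathrm{tr}(XY)$ and $\mathfrak p_1\oplus\cdots\oplus\mathfrak p_4$ is Nikonorov's $\mathrm{Ad}$-invariant decomposition with parameter $\sin^2(2\alpha)=1$; Einstein metrics in this family are critical points of $S$. *)

(* Defs.v *)
From Stdlib Require Import Reals Lra.
From Coquelicot Require Import Coquelicot.
Open Scope R_scope.

Definition S (x1 x2 x3 x4 : R) : R :=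
  Rpower (x1^2 * x2^2 * x3^2 * x4) (1/7) *
  ( 12/x1 + 12/x2 + 12/x3 + 6/x4
    - 2 * (x1/(x2*x3) + x2/(x1*x3) + x3/(x1*x2))
    - 3 * (x1/(x2*x4) + x2/(x1*x4) + x4/(x1*x2)) ).

Definition critical_point_S (x1 x2 x3 x4 : R) : Prop :=
  is_derive (fun t => S t x2 x3 x4) x1 0 /\
  is_derive (fun t => S x1 t x3 x4) x2 0 /\
  is_derive (fun t => S x1 x2 t x4) x3 0 /\
  is_derive (fun t => S x1 x2 x3 t) x4 0.

Definition d22S (x1 x2 x3 x4 : R) : R :=
  Derive (fun t => Derive (fun s => S x1 s x3 x4) t) x2.

(* Main.v *)
Require Import Defs.
From Stdlib Require Import Reals Lra.
From Coquelicot Require Import Coquelicot.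
Open Scope R_scope.

Definition sA x1 x3 x4 := 12/x1+12/x3+6/x4.
Definition sB x1 x3 x4 := 12 - 2*(x1/x3) - 2*(x3/x1) - 3*(x1/x4) - 3*(x4/x1).
Definition sC x1 x3 x4 := -2/(x1*x3) - 3/(x1*x4).
Definition sE x1 x3 x4 t := Rpower (x1^2*t^2*x3^2*x4) (1/7).
Definition k1 x1 x3 x4 t := sE x1 x3 x4 t *
  ((2/7)*sA x1 x3 x4/t - (5/7)*sB x1 x3 x4/t^2 + (9/7)*sC x1 x3 x4).
Definition k2 x1 x3 x4 t := sE x1 x3 x4 t *
  ((-10*sA x1 x3 x4*t + 60*sB x1 x3 x4 + 18*sC x1 x3 x4*t^2)/(49*t^3)).

Lemma d1 x1 x3 x4 t : 0 < x1 -> 0 < x3 -> 0 < x4 -> 0 < t ->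
  is_derive (fun s => S x1 s x3 x4) t (k1 x1 x3 x4 t).
Proof.
intros h1 h3 h4 ht. unfold S, k1, sE, Rpower, sA, sB, sC.
auto_derive.
2: { replace (x1^2*t^2*x3^2*x4) with (x1*(x1*1)*(t*(t*1))*(x3*(x3*1))*x4) by ring.
     set (e := exp _). clearbody e. field. repeat split; lra. }
repeat split; try lra; try (apply Rmult_integral_contrapositive_currified; lra).
repeat apply Rmult_lt_0_compat; lra.
Qed.

Lemma d2 x1 x3 x4 t : 0 < x1 -> 0 < x3 -> 0 < x4 -> 0 < t ->
  is_derive (k1 x1 x3 x4) t (k2 x1 x3 x4 t).
Proof.
intros h1 h3 h4 ht. unfold k1, k2, sE, Rpower.
set (a := sA x1 x3 x4). set (b := sB x1 x3 x4). set (c := sC x1 x3 x4).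
auto_derive.
2: { replace (x1^2*t^2*x3^2*x4) with (x1*(x1*1)*(t*(t*1))*(x3*(x3*1))*x4) by ring.
     set (e := exp _). clearbody e. field. repeat split; lra. }
repeat split; try lra; try (apply Rmult_integral_contrapositive_currified; lra).
repeat apply Rmult_lt_0_compat; lra.
Qed.

Lemma divle a b c : 0 < b -> a <= c*b -> a/b <= c.
Proof. intros hb h. apply (Rmult_le_reg_r b); [lra|]. unfold Rdiv. rewrite Rmult_assoc, Rinv_l; lra. Qed.

Lemma absb x m : Rabs (x - m) <= 1/100000 -> m - 1/100000 <= x <= m + 1/100000.
Proof. unfold Rabs; destruct Rcase_abs; lra. Qed.

Theorem proposition2p5 (x1 x2 x3 x4 : R) :
  0 < x1 -> 0 < x2 -> 0 < x3 -> 0 < x4 ->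
  Rabs (x1 - (567352/100000)) <= 1/100000 ->
  Rabs (x2 - (109220/100000)) <= 1/100000 ->
  Rabs (x3 - (550695/100000)) <= 1/100000 ->
  Rabs (x4 - (572906/100000)) <= 1/100000 ->
  critical_point_S x1 x2 x3 x4 ->
  0 < d22S x1 x2 x3 x4.
Proof.
intros h1 h2 h3 h4 b1 b2 b3 b4 _.
apply absb in b1; apply absb in b2; apply absb in b3; apply absb in b4.
assert (Hd : d22S x1 x2 x3 x4 = k2 x1 x3 x4 x2).
{ unfold d22S. apply is_derive_unique.
  apply (is_derive_ext_loc (k1 x1 x3 x4)).
  - exists (mkposreal x2 h2). intros t Ht.
    unfold ball in Ht; simpl in Ht; unfold AbsRing_ball, abs, minus, plus, opp in Ht; simpl in Ht.
    assert (ht : 0 < t) by (unfold Rabs in Ht; destruct Rcase_abs in Ht; lra).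
    symmetry. apply is_derive_unique. apply d1; lra.
  - apply d2; lra. }
rewrite Hd. unfold k2. apply Rmult_lt_0_compat.
{ unfold sE, Rpower. apply exp_pos. }
unfold Rdiv. apply Rmult_lt_0_compat.
2: { apply Rinv_0_lt_compat. apply Rmult_lt_0_compat; [lra|]. apply pow_lt; lra. }
unfold sA, sB, sC.
assert (a1 : 12/x1 <= 2.12) by (apply divle; lra).
assert (a3 : 12/x3 <= 2.19) by (apply divle; lra).
assert (a4 : 6/x4 <= 1.05) by (apply divle; lra).
assert (a1' : 0 <= 12/x1) by (unfold Rdiv; apply Rmult_le_pos; [lra|left; apply Rinv_0_lt_compat; lra]).
assert (a3' : 0 <= 12/x3) by (unfold Rdiv; apply Rmult_le_pos; [lra|left; apply Rinv_0_lt_compat; lra]).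
assert (a4' : 0 <= 6/x4) by (unfold Rdiv; apply Rmult_le_pos; [lra|left; apply Rinv_0_lt_compat; lra]).
assert (q1 : x1/x3 <= 1.033) by (apply divle; lra).
assert (q2 : x3/x1 <= 0.972) by (apply divle; lra).
assert (q3 : x1/x4 <= 0.994) by (apply divle; lra).
assert (q4 : x4/x1 <= 1.011) by (apply divle; lra).
assert (c1 : 2/(x1*x3) <= 0.065) by (apply divle; nra).
assert (c2 : 3/(x1*x4) <= 0.093) by (apply divle; nra).
set (A := 12/x1+12/x3+6/x4) in *.
assert (hA : 0 <= A <= 5.36) by (unfold A; lra).
set (B := 12 - 2*(x1/x3) - 2*(x3/x1) - 3*(x1/x4) - 3*(x4/x1)).
assert (hB : B >= 1.975) by (unfold B; lra).
set (C := -2/(x1*x3) - 3/(x1*x4)).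
assert (hC : C >= -0.158 /\ C <= 0).
{ unfold C; split; [|]. unfold Rdiv in *. lra.
  assert (0 <= 2/(x1*x3)) by (unfold Rdiv; apply Rmult_le_pos; [lra|left; apply Rinv_0_lt_compat; nra]).
  assert (0 <= 3/(x1*x4)) by (unfold Rdiv; apply Rmult_le_pos; [lra|left; apply Rinv_0_lt_compat; nra]).
  unfold Rdiv in *. lra. }
assert (e1 : A * x2 <= 5.36 * 1.1) by nra.
assert (e2 : C * x2^2 >= -0.158 * 1.21) by (simpl; nra).
lra.
Qed.
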